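(* Consider the $n$-body problem in ${\bf H}^2$ with all masses equal to $m>0$, $n\ge2$, and let $\alpha_i=2\pi i/n$. For every $m>0$ and every $z>1$ there exist $\omega>0$ and $\omega<0$ such that ${\bf q}_i(t)=(\rho\cos(\omega t+\alpha_i),\rho\sin(\omega t+\alpha_i), z)$, $\rho=(z^2-1)^{1/2}$, $i=1,\dots,n$, is a solution of the equations of motion (an elliptic relative equilibrium in which the regular $n$-gon rotates in the plane $z=$ constant).
   Context: The $n$-body problem in ${\bf H}^2$ (Weierstrass model): with the Lorentz inner product ${\bf a}\boxdot{\bf b}=a_xb_x+a_yb_y-a_zb_z$ on $\mathbb R^3$, ${\bf H}^2=\{(x,y,z): x^2+y^2-z^2=-1,\ z>0\}$. Bodies of masses $m_1,\dots,m_n>0$ have positions ${\bf q}_i=(x_i,y_i,z_i)\in{\bf H}^2$ and satisfy $$\ddot{\bf q}_i=\sum_{j\ne i}\frac{m_j[{\bf q}_j+({\bf q}_i\boxdot{\bf q}_j){\bf q}_i]}{[({\bf q}_i\boxdot{\bf q}_j)^2-1]^{3/2}}+(\dot{\bf q}_i\boxdot\dot{\bf q}_i){\bf q}_i,\qquad {\bf q}_i\boxdot{\bf q}_i=-1,\ \ {\bf q}_i\boxdot\dot{\bf q}_i=0,$$ $i=1,\dots,n$, defined only for collisionless configurations (${\bf q}_i\ne{\bf q}_j$ for $i\ne j$). *)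

(* Defs.v *)
From Stdlib Require Import Reals Lra List.
Open Scope R_scope.

Record V3 : Type := mkV3 { vx : R; vy : R; vz : R }.

Definition vadd (a b : V3) : V3 := mkV3 (vx a + vx b) (vy a + vy b) (vz a + vz b).
Definition vscale (c : R) (a : V3) : V3 := mkV3 (c * vx a) (c * vy a) (c * vz a).
Definition vzero : V3 := mkV3 0 0 0.

Definition lor (a b : V3) : R := vx a * vx b + vy a * vy b - vz a * vz b.

(* the hyperbolic plane H^2 (Weierstrass model) *)
Definition inH2 (a : V3) : Prop := lor a a = -1 /\ vz a > 0.

Definition vderiv (f : R -> V3) (t : R) (v : V3) : Prop :=
  derivable_pt_lim (fun s => vx (f s)) t (vx v) /\
  derivable_pt_lim (fun s => vy (f s)) t (vy v) /\
  derivable_pt_lim (fun s => vz (f s)) t (vz v).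

Definition vsum_others (n i : nat) (F : nat -> V3) : V3 :=
  fold_right (fun j acc => if Nat.eq_dec j i then acc else vadd (F j) acc)
             vzero (seq 1 n).

Definition force (n : nat) (m : nat -> R) (q : nat -> V3) (v : V3) (i : nat) : V3 :=
  vadd (vsum_others n i (fun j =>
          vscale (m j / Rpower ((lor (q i) (q j))^2 - 1) (3/2))
                 (vadd (q j) (vscale (lor (q i) (q j)) (q i)))))
       (vscale (lor v v) (q i)).

Definition is_solution (n : nat) (m : nat -> R) (q : nat -> R -> V3) : Prop :=
  exists (v a : nat -> R -> V3),
    forall t : R,
      (forall i j, (1 <= i <= n)%nat -> (1 <= j <= n)%nat -> i <> j -> q i t <> q j t) /\
      (forall i, (1 <= i <= n)%nat ->
         vderiv (q i) t (v i t) /\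
         vderiv (v i) t (a i t) /\
         inH2 (q i t) /\
         lor (q i t) (v i t) = 0 /\
         a i t = force n m (fun j => q j t) (v i t) i).

Definition ngon_orbit (n : nat) (z omega : R) (i : nat) (t : R) : V3 :=
  let rho := sqrt (z^2 - 1) in
  let alpha := 2 * PI * INR i / INR n in
  mkV3 (rho * cos (omega * t + alpha)) (rho * sin (omega * t + alpha)) z.

(* Main.v *)
Require Import Defs.
From Stdlib Require Import Reals Lra Lia List.
Open Scope R_scope.

Definition so (l : list nat) (i : nat) (f : nat -> R) : R :=
  fold_right (fun j acc => if Nat.eq_dec j i then acc else f j + acc) 0 l.
Definition rsum (l : list nat) (f : nat -> R) : R :=
  fold_right (fun j acc => f j + acc) 0 l.

Lemma vsum_others_eq n i F :
  vsum_others n i F = mkV3 (so (seq 1 n) i (fun j => vx (F j)))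
                           (so (seq 1 n) i (fun j => vy (F j)))
                           (so (seq 1 n) i (fun j => vz (F j))).
Proof.
  unfold vsum_others, so. induction (seq 1 n) as [|a l IH]; simpl; auto.
  destruct (Nat.eq_dec a i); rewrite IH; reflexivity.
Qed.

Lemma so_app l1 l2 i f : so (l1 ++ l2) i f = so l1 i f + so l2 i f.
Proof. induction l1; simpl. lra. destruct (Nat.eq_dec a i); unfold so in *; rewrite IHl1; lra. Qed.

Lemma so_ext l i f g : (forall j, f j = g j) -> so l i f = so l i g.
Proof. intro H; induction l; simpl; auto. destruct (Nat.eq_dec a i); unfold so in *; rewrite ?H, IHl; lra. Qed.

Lemma so_lin l i f g a b : so l i (fun j => a * f j + b * g j) = a * so l i f + b * so l i g.
Proof. induction l; simpl. lra. destruct (Nat.eq_dec a0 i); unfold so in *; rewrite IHl; lra. Qed.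

Lemma so_map_S l i f : so (map S l) (S i) f = so l i (fun j => f (S j)).
Proof. induction l; simpl; auto. destruct (Nat.eq_dec (S a) (S i)), (Nat.eq_dec a i); try lia;
  unfold so in *; rewrite IHl; lra. Qed.

Lemma so_rsum l i f : (forall j, In j l -> j <> i) -> so l i f = rsum l f.
Proof. induction l; simpl; intros H; auto. destruct (Nat.eq_dec a i).
  exfalso; apply (H a); auto. unfold so, rsum in *; rewrite IHl; auto. Qed.

Lemma rsum_app l1 l2 f : rsum (l1 ++ l2) f = rsum l1 f + rsum l2 f.
Proof. induction l1; simpl. lra. unfold rsum in *; rewrite IHl1; lra. Qed.
Lemma rsum_ext l f g : (forall j, f j = g j) -> rsum l f = rsum l g.
Proof. intro H; induction l; simpl; auto. unfold rsum in *; rewrite H, IHl; lra. Qed.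
Lemma rsum_opp l f : rsum l (fun j => - f j) = - rsum l f.
Proof. induction l; simpl. lra. unfold rsum in *; rewrite IHl; lra. Qed.
Lemma rsum_nonneg l f : (forall j, 0 <= f j) -> 0 <= rsum l f.
Proof. intro H; induction l; simpl. lra. unfold rsum in *; specialize (H a); lra. Qed.
Lemma rsum_map_S l f : rsum (map S l) f = rsum l (fun j => f (S j)).
Proof. induction l; simpl; auto. unfold rsum in *; rewrite IHl; lra. Qed.

Lemma rsum_shift a len (g : R -> R) :
  rsum (seq (S a) len) (fun j => g (INR j)) = rsum (seq a len) (fun j => g (INR j + 1)).
Proof. rewrite <- seq_shift, rsum_map_S. apply rsum_ext; intro j; rewrite S_INR; reflexivity. Qed.

Lemma rsum_refl len : forall a (g : R -> R),
  rsum (seq a len) (fun j => g (INR j)) =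
  rsum (seq a len) (fun j => g (2 * INR a + INR len - 1 - INR j)).
Proof.
  induction len; intros a g. reflexivity.
  rewrite S_INR.
  change (seq a (S len)) with (a :: seq (S a) len) at 2.
  rewrite seq_S, rsum_app. simpl (rsum (_ :: _) _).
  rewrite (rsum_ext (seq (S a) len) _ (fun j => (fun x => g (2 * INR a + INR len - x)) (INR j))).
  2:{ intro j; f_equal; ring. }
  rewrite (IHlen (S a) (fun x => g (2 * INR a + INR len - x))).
  rewrite (rsum_ext (seq (S a) len) (fun j => (fun x => g (2 * INR a + INR len - x)) (2 * INR (S a) + INR len - 1 - INR j)) (fun j => g (INR j - 1))).
  2:{ intro j. f_equal. rewrite S_INR. ring. }
  rewrite <- seq_shift, rsum_map_S. rewrite (rsum_ext (seq a len) (fun j => g (INR (S j) - 1)) (fun j => g (INR j))).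
  2:{ intro j; f_equal; rewrite S_INR; ring. }
  rewrite plus_INR. replace (2 * INR a + (INR len + 1) - 1 - INR a) with (INR a + INR len) by ring.
  lra.
Qed.

Definition T (n : nat) (h : R -> R) (i : nat) : R :=
  so (seq 1 n) i (fun j => h (INR j - INR i)).

Lemma T_step n h i : (forall x, h (x + INR n) = h x) -> (1 <= i < n)%nat ->
  T n h (S i) = T n h i.
Proof.
  intros Hp Hi. unfold T. destruct n as [|n']; [lia|].
  set (X := so (seq 1 n') i (fun j => h (INR j - INR i))).
  assert (E1 : so (seq 1 (S n')) (S i) (fun j => h (INR j - INR (S i))) = h (0 - INR i) + X).
  { rewrite <- seq_shift, so_map_S.
    rewrite (so_ext _ _ _ (fun j => h (INR j - INR i))).
    2:{ intro j; f_equal; rewrite !S_INR; ring. }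
    change (seq 0 (S n')) with (0%nat :: seq 1 n'). unfold so at 1; simpl fold_right.
    unfold X; destruct i as [|i']; [lia|]. simpl INR. reflexivity. }
  assert (E2 : so (seq 1 (S n')) i (fun j => h (INR j - INR i)) = X + h (INR (1 + n') - INR i)).
  { rewrite seq_S, so_app. unfold so at 2; cbv beta iota delta [fold_right]. destruct (Nat.eq_dec (1 + n') i); [lia|]. unfold X; lra. }
  rewrite E1, E2.
  rewrite <- (Hp (0 - INR i)). replace (0 - INR i + INR (S n')) with (INR (1 + n') - INR i).
  2:{ change (1 + n')%nat with (S n'). ring. }
  lra.
Qed.

Lemma T_const n h : (forall x, h (x + INR n) = h x) -> forall i, (1 <= i <= n)%nat ->
  T n h i = T n h 1.
Proof.
  intros Hp i Hi. induction i as [|i IH]; [lia|].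
  destruct (Nat.eq_dec i 0) as [->|]; [reflexivity|].
  rewrite T_step; auto; [apply IH|]; lia.
Qed.

Lemma eq_mod (a b k1 k2 e1 e2 : R) : e1 = 0 -> e2 = 0 -> a - b = k1*e1 + k2*e2 -> a = b.
Proof. intros -> ->. lra. Qed.

Lemma cos_lt_1 x : 0 < x < 2 * PI -> cos x < 1.
Proof.
  intros H. replace x with (2 * (x/2)) by field. rewrite cos_2a_sin.
  assert (0 < sin (x/2)) by (apply sin_gt_0; lra). nra.
Qed.

Lemma Lcos r w a t : derivable_pt_lim (fun s => r * cos (w*s+a)) t (-(r*w)*sin(w*t+a)).
Proof.
  assert (H1 : derivable_pt_lim (fun s => w*s+a) t w).
  { assert (H : derivable_pt_lim (mult_real_fct w id + fct_cte a)%F t (w*1+0)).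
    { apply derivable_pt_lim_plus. apply derivable_pt_lim_scal, derivable_pt_lim_id. apply derivable_pt_lim_const. }
    replace (w*1+0) with w in H by ring. exact H. }
  assert (H2 := derivable_pt_lim_comp _ cos t w _ H1 (derivable_pt_lim_cos _)).
  replace (-(r*w)*sin(w*t+a)) with (r * (- sin (w*t+a) * w)) by ring.
  apply (derivable_pt_lim_scal (comp cos (fun s => w*s+a))). exact H2.
Qed.

Lemma Lsin r w a t : derivable_pt_lim (fun s => r * sin (w*s+a)) t (r*w*cos(w*t+a)).
Proof.
  assert (H1 : derivable_pt_lim (fun s => w*s+a) t w).
  { assert (H : derivable_pt_lim (mult_real_fct w id + fct_cte a)%F t (w*1+0)).
    { apply derivable_pt_lim_plus. apply derivable_pt_lim_scal, derivable_pt_lim_id. apply derivable_pt_lim_const. }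
    replace (w*1+0) with w in H by ring. exact H. }
  assert (H2 := derivable_pt_lim_comp _ sin t w _ H1 (derivable_pt_lim_sin _)).
  replace (r*w*cos(w*t+a)) with (r * (cos (w*t+a) * w)) by ring.
  apply (derivable_pt_lim_scal (comp sin (fun s => w*s+a))). exact H2.
Qed.

Lemma Lconst c t : derivable_pt_lim (fun _ => c) t 0.
Proof. apply derivable_pt_lim_const. Qed.

Definition Kf (m z x : R) := m / Rpower (((z^2-1) * cos x - z^2)^2 - 1) (3/2).
Definition hA m z n x := Kf m z (2*PI/INR n * x) * (1 - cos (2*PI/INR n * x)).
Definition hB m z n x := Kf m z (2*PI/INR n * x) * sin (2*PI/INR n * x).

Lemma cos_per y : cos (y + 2*PI) = cos y.
Proof. rewrite cos_plus, cos_2PI, sin_2PI; ring. Qed.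
Lemma sin_per y : sin (y + 2*PI) = sin y.
Proof. rewrite sin_plus, cos_2PI, sin_2PI; ring. Qed.

Lemma arg_per n x : INR n <> 0 -> 2*PI/INR n * (x + INR n) = 2*PI/INR n * x + 2*PI.
Proof. intros; field; auto. Qed.

Lemma hA_per m z n x : INR n <> 0 -> hA m z n (x + INR n) = hA m z n x.
Proof. intros H; unfold hA, Kf; rewrite arg_per, cos_per; auto. Qed.
Lemma hB_per m z n x : INR n <> 0 -> hB m z n (x + INR n) = hB m z n x.
Proof. intros H; unfold hB, Kf; rewrite arg_per, cos_per, sin_per; auto. Qed.
Lemma hB_odd m z n x : hB m z n (- x) = - hB m z n x.
Proof. unfold hB, Kf. replace (2*PI/INR n * - x) with (- (2*PI/INR n * x)) by ring.
  rewrite cos_neg, sin_neg; ring. Qed.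

Lemma Kf_pos m z x : 0 < m -> 0 < Kf m z x.
Proof. intros; unfold Kf, Rpower. apply Rdiv_lt_0_compat; auto. apply exp_pos. Qed.
Lemma hA_nonneg m z n x : 0 < m -> 0 <= hA m z n x.
Proof. intros; unfold hA. apply Rmult_le_pos. apply Rlt_le, Kf_pos; auto.
  pose proof (COS_bound (2 * PI / INR n * x)); lra. Qed.

Lemma so_cons a l i f : so (a :: l) i f = if Nat.eq_dec a i then so l i f else f a + so l i f.
Proof. reflexivity. Qed.

Lemma so_nonneg l i f : (forall j, 0 <= f j) -> 0 <= so l i f.
Proof. intro H; induction l; simpl. lra. destruct (Nat.eq_dec a i); unfold so in *; auto.
  specialize (H a); lra. Qed.

Lemma twoPI_n n : (2 <= n)%nat -> 0 < 2*PI/INR n < 2*PI.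
Proof. intros Hn. assert (H2 : 2 <= INR n) by (replace 2 with (INR 2) by (simpl; ring); apply le_INR; auto).
  pose proof PI_RGT_0. split. apply Rdiv_lt_0_compat; lra.
  assert (/ INR n <= / 2) by (apply Rinv_le_contravar; lra).
  assert (0 < / INR n) by (apply Rinv_0_lt_compat; lra).
  unfold Rdiv. assert (2*PI*/INR n <= 2*PI*/2) by (apply Rmult_le_compat_l; lra).
  replace (2*PI*/2) with PI in * by field. lra. Qed.

Lemma A_pos m z n : 0 < m -> (2 <= n)%nat -> 0 < T n (hA m z n) 1.
Proof.
  intros Hm Hn. unfold T. destruct n as [|[|k]]; [lia|lia|].
  change (seq 1 (S (S k))) with (1%nat :: 2%nat :: seq 3 k).
  rewrite !so_cons. destruct (Nat.eq_dec 1 1); [|congruence].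
  destruct (Nat.eq_dec 2 1); [lia|].
  assert (0 <= so (seq 3 k) 1 (fun j => hA m z (S (S k)) (INR j - INR 1))) by (apply so_nonneg; intro; apply hA_nonneg; auto).
  assert (0 < hA m z (S (S k)) (INR 2 - INR 1)); [|lra].
  replace (INR 2 - INR 1) with 1 by (simpl; ring). unfold hA. rewrite Rmult_1_r.
  apply Rmult_lt_0_compat. apply Kf_pos; auto.
  pose proof (cos_lt_1 _ (twoPI_n (S (S k)) Hn)). lra.
Qed.

Lemma B_zero m z n : (2 <= n)%nat -> T n (hB m z n) 1 = 0.
Proof.
  intros Hn. unfold T. destruct n as [|k]; [lia|].
  change (seq 1 (S k)) with (1%nat :: seq 2 k).
  rewrite !so_cons. destruct (Nat.eq_dec 1 1); [|congruence].
  rewrite so_rsum. 2:{ intros j Hj; apply in_seq in Hj; lia. }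
  assert (INR (S k) <> 0) by (apply not_0_INR; lia).
  set (S0 := rsum (seq 2 k) (fun j => hB m z (S k) (INR j - INR 1))).
  assert (S0 = - S0); [|lra].
  unfold S0 at 1. rewrite (rsum_refl k 2 (fun x => hB m z (S k) (x - INR 1))).
  rewrite (rsum_ext _ _ (fun j => - hB m z (S k) (INR j - INR 1))).
  - rewrite rsum_opp; reflexivity.
  - intro j. cbv beta.
    replace (2 * INR 2 + INR k - 1 - INR j - INR 1) with (-(INR j - INR 1) + INR (S k))
      by (rewrite (S_INR k); simpl; ring).
    rewrite hB_per, hB_odd; auto.
Qed.


Lemma sq_rho z : 1 < z -> sqrt (z^2-1) * sqrt (z^2-1) - (z^2-1) = 0.
Proof. intros; rewrite sqrt_sqrt; [ring|nra]. Qed.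

Lemma sc1 x : sin x * sin x + cos x * cos x - 1 = 0.
Proof. pose proof (sin2_cos2 x); unfold Rsqr in *; lra. Qed.

Lemma comp_lemma n m z w t i j : (1 <= n)%nat -> 1 < z ->
  let q := fun k => ngon_orbit n z w k t in
  let th := w * t + 2 * PI * INR i / INR n in
  let rho := sqrt (z^2-1) in
  let F := vscale (m / Rpower ((lor (q i) (q j))^2 - 1) (3/2))
                  (vadd (q j) (vscale (lor (q i) (q j)) (q i))) in
  vx F = (-(rho*z^2*cos th)) * hA m z n (INR j - INR i) + (-(rho*sin th)) * hB m z n (INR j - INR i) /\
  vy F = (-(rho*z^2*sin th)) * hA m z n (INR j - INR i) + (rho*cos th) * hB m z n (INR j - INR i) /\
  vz F = (-(z*(z^2-1))) * hA m z n (INR j - INR i) + 0 * hB m z n (INR j - INR i).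
Proof.
  intros Hn Hz q th rho F.
  assert (Hn0 : INR n <> 0) by (apply not_0_INR; lia).
  set (d := 2*PI/INR n * (INR j - INR i)).
  assert (Hth : w * t + 2 * PI * INR j / INR n = th + d) by (unfold th, d; field; auto).
  assert (Hlor : lor (q i) (q j) = (z^2-1) * cos d - z^2).
  { unfold lor, q, ngon_orbit; cbn [vx vy vz]. fold rho th. rewrite Hth, cos_plus, sin_plus.
    apply (eq_mod _ _ (rho*rho*cos d) (cos d) _ _ (sc1 th) (sq_rho z Hz)). unfold rho; ring. }
  unfold F. rewrite Hlor. unfold hA, hB, Kf. fold d.
  unfold q, ngon_orbit, vscale, vadd; cbn [vx vy vz]. fold rho th. rewrite Hth, cos_plus, sin_plus.
  repeat split; ring.
Qed.

Lemma cos_diff_lt n i j : (1 <= i)%nat -> (i < j)%nat -> (j <= n)%nat ->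
  forall w t, cos ((w * t + 2 * PI * INR j / INR n) - (w * t + 2 * PI * INR i / INR n)) < 1.
Proof.
  intros Hi Hij Hj w t. assert (Hn0 : 0 < INR n) by (apply lt_0_INR; lia).
  apply cos_lt_1. replace (w * t + 2 * PI * INR j / INR n - (w * t + 2 * PI * INR i / INR n))
    with (2 * PI * (INR (j - i) / INR n)) by (rewrite minus_INR by lia; field; lra).
  assert (0 < INR (j - i)) by (apply lt_0_INR; lia).
  assert (INR (j - i) < INR n) by (apply lt_INR; lia).
  assert (0 < INR (j - i) / INR n < 1).
  { split. apply Rdiv_lt_0_compat; lra. apply (Rmult_lt_reg_r (INR n)); auto.
    unfold Rdiv; rewrite Rmult_assoc, Rinv_l; lra. }
  pose proof PI_RGT_0. nra.
Qed.

Lemma sol n m z w : (2 <= n)%nat -> 0 < m -> 1 < z -> w * w = T n (hA m z n) 1 ->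
  is_solution n (fun _ => m) (ngon_orbit n z w).
Proof.
  intros Hn Hm Hz Hw.
  assert (Hn1 : (1 <= n)%nat) by lia.
  assert (Hrho : 0 < sqrt (z^2-1)) by (apply sqrt_lt_R0; nra).
  exists (fun i t => mkV3 (-(sqrt (z^2-1)*w) * sin (w*t + 2*PI*INR i/INR n))
                    (sqrt (z^2-1)*w*cos (w*t + 2*PI*INR i/INR n)) 0).
  exists (fun i t => mkV3 (-(sqrt (z^2-1)*w)*w*cos (w*t + 2*PI*INR i/INR n))
                    (-(sqrt (z^2-1)*w*w)*sin (w*t + 2*PI*INR i/INR n)) 0).
  intro t. split.
  - intros i j Hi Hj Hij Heq. unfold ngon_orbit in Heq. injection Heq as Hc Hs.
    replace (z*(z*1)) with (z^2) in Hc, Hs by ring. apply Rmult_eq_reg_l in Hc; [|lra]. apply Rmult_eq_reg_l in Hs; [|lra].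
    set (ti := w * t + 2 * PI * INR i / INR n) in *.
    set (tj := w * t + 2 * PI * INR j / INR n) in *.
    assert (E1 : cos (tj - ti) = 1) by (rewrite cos_minus, <- Hc, <- Hs; pose proof (sc1 ti); lra).
    assert (E2 : cos (ti - tj) = 1) by (rewrite cos_minus, <- Hc, <- Hs; pose proof (sc1 ti); lra).
    destruct (Nat.lt_gt_cases i j) as [[Hl|Hl] _]; auto.
    + pose proof (cos_diff_lt n i j ltac:(lia) Hl ltac:(lia) w t). fold ti tj in H. lra.
    + pose proof (cos_diff_lt n j i ltac:(lia) Hl ltac:(lia) w t). fold ti tj in H. lra.
  - intros i Hi. split; [|split; [|split; [|split]]].
    + unfold vderiv, ngon_orbit; cbv zeta; cbn [vx vy vz].
      split; [apply Lcos|split; [apply Lsin|apply Lconst]].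
    + unfold vderiv; cbn [vx vy vz].
      split; [apply Lsin|split; [apply Lcos|apply Lconst]].
    + unfold inH2, lor, ngon_orbit; cbv zeta; cbn [vx vy vz]. split; [|lra].
      apply (eq_mod _ _ (sqrt (z^2-1) * sqrt (z^2-1)) 1 _ _ (sc1 (w*t + 2*PI*INR i/INR n)) (sq_rho z Hz)). ring.
    + unfold lor, ngon_orbit; cbv zeta; cbn [vx vy vz]. ring.
    + unfold force. rewrite vsum_others_eq.
      set (th := w * t + 2 * PI * INR i / INR n).
      set (rho := sqrt (z^2-1)).
      assert (SA : so (seq 1 n) i (fun j => hA m z n (INR j - INR i)) = w * w).
      { change (T n (hA m z n) i = w * w). rewrite T_const; auto.
        intro x; apply hA_per; apply not_0_INR; lia. }
      assert (SB : so (seq 1 n) i (fun j => hB m z n (INR j - INR i)) = 0).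
      { change (T n (hB m z n) i = 0). rewrite T_const; auto. apply B_zero; auto.
        intro x; apply hB_per; apply not_0_INR; lia. }
      unfold vadd at 1; unfold vscale at 1; cbn [vx vy vz]. f_equal.
      * erewrite (so_ext (seq 1 n) i _ (fun j => (-(rho*z^2*cos th)) * hA m z n (INR j - INR i) + (-(rho*sin th)) * hB m z n (INR j - INR i))).
        2:{ intro j. exact (proj1 (comp_lemma n m z w t i j Hn1 Hz)). }
        rewrite so_lin, SA, SB. unfold lor, ngon_orbit, vscale; cbv zeta; cbn [vx vy vz]. fold th rho.
        apply (eq_mod _ _ (-(rho^3*w^2*cos th)) (-(rho*w^2*cos th)) _ _ (sc1 th) (sq_rho z Hz)). unfold rho; ring.
      * erewrite (so_ext (seq 1 n) i _ (fun j => (-(rho*z^2*sin th)) * hA m z n (INR j - INR i) + (rho*cos th) * hB m z n (INR j - INR i))).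
        2:{ intro j. exact (proj1 (proj2 (comp_lemma n m z w t i j Hn1 Hz))). }
        rewrite so_lin, SA, SB. unfold lor, ngon_orbit, vscale; cbv zeta; cbn [vx vy vz]. fold th rho.
        apply (eq_mod _ _ (-(rho^3*w^2*sin th)) (-(rho*w^2*sin th)) _ _ (sc1 th) (sq_rho z Hz)). unfold rho; ring.
      * erewrite (so_ext (seq 1 n) i _ (fun j => (-(z*(z^2-1))) * hA m z n (INR j - INR i) + 0 * hB m z n (INR j - INR i))).
        2:{ intro j. exact (proj2 (proj2 (comp_lemma n m z w t i j Hn1 Hz))). }
        rewrite so_lin, SA, SB. unfold lor, ngon_orbit, vscale; cbv zeta; cbn [vx vy vz]. fold th rho.
        apply (eq_mod _ _ (-(rho^2*w^2*z)) (-(z*w^2)) _ _ (sc1 th) (sq_rho z Hz)). unfold rho; ring.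
Qed.

Theorem mainTheorem13 (n : nat) (m z : R) :
  (2 <= n)%nat -> 0 < m -> 1 < z ->
  (exists omega : R, omega > 0 /\ is_solution n (fun _ => m) (ngon_orbit n z omega)) /\
  (exists omega : R, omega < 0 /\ is_solution n (fun _ => m) (ngon_orbit n z omega)).
Proof.
  intros Hn Hm Hz.
  pose proof (A_pos m z n Hm Hn) as HA.
  assert (Hs : sqrt (T n (hA m z n) 1) * sqrt (T n (hA m z n) 1) = T n (hA m z n) 1)
    by (apply sqrt_sqrt; lra).
  pose proof (sqrt_lt_R0 _ HA) as Hp.
  split.
  - exists (sqrt (T n (hA m z n) 1)). split; [lra|]. apply sol; auto.
  - exists (- sqrt (T n (hA m z n) 1)). split; [lra|]. apply sol; auto.
    transitivity (sqrt (T n (hA m z n) 1) * sqrt (T n (hA m z n) 1)); [ring|exact Hs].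
Qed.
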